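(* Let $p$ be a prime, let $P$ be a finite $p$-group, and let $T$ be a subgroup of $P$ of index $p^c$. Then for every non-negative integer $k$, \[ |\mathrm{Sub}_{p^k}(P,T)| \leq \binom{c}{k}_p . \]
   Context: For a group $R$, a subgroup $T\le R$ and an integer $k$, $\mathrm{Sub}_k(R,T)=\{H\le R : T\le H,\ [R:H]=k\}$. For a prime $p$ and non-negative integers $m,r$, the Gaussian binomial coefficient is $\binom{m}{r}_p=\prod_{i=0}^{r-1}\frac{p^{m-i}-1}{p^{i+1}-1}$. *)

(* Defs.v *)
From mathcomp Require Import all_boot all_order all_algebra all_fingroup all_solvable.
Set Implicit Arguments. Unset Strict Implicit. Unset Printing Implicit Defensive.
Import GRing.Theory Num.Theory.

(* Gaussian binomial coefficient binom(m, r)_p, computed in rat: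
   prod_{i=0}^{r-1} (p^(m-i) - 1) / (p^(i+1) - 1).
   For r > m the factor i = m is p^0 - 1 = 0, so the value is 0. *)
Definition gauss_binom (p m r : nat) : rat :=
  (\prod_(i < r) (((expn p (m - i))%:R - 1) / ((expn p i.+1)%:R - 1)))%R.

Definition Sub_k (gT : finGroupType) (k : nat) (R T : {group gT}) :
  {set {group gT}} :=
  [set H : {group gT} | [&& T \subset H, H \subset R & (#|R : H|)%g == k]].

(* Main.v *)
Require Import Defs.
From mathcomp Require Import all_boot all_order all_algebra all_fingroup all_solvable.
From mathcomp Require Import ring.
Set Implicit Arguments. Unset Strict Implicit. Unset Printing Implicit Defensive.
Import GRing.Theory Num.Theory.

Section GB.
Local Open Scope ring_scope.

Lemma gbS p c k : gauss_binom p c k.+1 =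
  gauss_binom p c k * (((p ^ (c - k))%N%:R - 1) / ((p ^ k.+1)%N%:R - 1)).
Proof. by rewrite /gauss_binom big_ord_recr. Qed.

Lemma gb0 p c : gauss_binom p c 0 = 1.
Proof. by rewrite /gauss_binom big_ord0. Qed.

Lemma gbSS p c k : gauss_binom p c.+1 k.+1 =
  ((p ^ c.+1)%N%:R - 1) / ((p ^ k.+1)%N%:R - 1) * gauss_binom p c k.
Proof.
elim: k => [|k IH]; first by rewrite gbS !gb0 subn0 mul1r mulr1.
rewrite gbS IH gbS subSS.
set a := ((p ^ c.+1)%N%:R - 1 : rat).
set b := ((p ^ k.+1)%N%:R - 1 : rat).
set d := ((p ^ k.+2)%N%:R - 1 : rat).
set e := ((p ^ (c - k))%N%:R - 1 : rat).
ring.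
Qed.

Lemma gb_big p c j : gauss_binom p c (c + j).+1 = 0.
Proof.
elim: j => [|j IH].
  by rewrite addn0 gbS subnn expn0 subrr mul0r mulr0.
by rewrite addnS gbS IH mul0r.
Qed.

Lemma gb_pascal p c k : prime p ->
  gauss_binom p c.+1 k.+1 = gauss_binom p c k + (p ^ k.+1)%N%:R * gauss_binom p c k.+1.
Proof.
move=> pp.
have p1 : (1 < p)%N by apply: prime_gt1.
case: (leqP k c) => kc; last first.
  have [j ->] : exists j, k = (c + j).+1 by exists (k - c.+1)%N; rewrite -addSn subnKC.
  have e2 : gauss_binom p c (c + j).+2 = 0 by rewrite -addnS gb_big.
  have e3 : gauss_binom p c.+1 (c + j).+2 = 0 by rewrite -addSn gb_big.
  by rewrite e2 e3 gb_big mulr0 addr0.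
rewrite gbSS gbS.
have -> : (p ^ c.+1 = p ^ k.+1 * p ^ (c - k))%N by rewrite -expnD addSn subnKC.
have q1 : ((p ^ k.+1)%N%:R - 1 : rat) != 0.
  rewrite subr_eq0 pnatr_eq1 -(expn0 p) eqn_exp2l //.
rewrite natrM.
set q := ((p ^ k.+1)%N%:R : rat) in q1 *.
set r := ((p ^ (c - k))%N%:R : rat).
set x := gauss_binom p c k.
by field.
Qed.

End GB.


Section S.
Variable gT : finGroupType.
Implicit Types P T M H K : {group gT}.
Local Open Scope group_scope.

Lemma inSub n P T H : (H \in Sub_k n P T) = [&& T \subset H, H \subset P & #|P : H|%g == n].
Proof. by rewrite /Sub_k inE. Qed.

Lemma Sub_1 P T : (#|Sub_k 1 P T| <= 1)%N.
Proof.
apply/card_le1_eqP => H1 H2; rewrite !inSub => /and3P[_ s1 /eqP i1] /and3P[_ s2 /eqP i2].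
by apply/val_inj; rewrite /= (index1g s1 i1) (index1g s2 i2).
Qed.

Lemma Sub_top p k P T : prime p -> T \subset P -> #|P : T|%g = 1%N -> #|Sub_k (p ^ k.+1)%N P T| = 0%N.
Proof.
move=> pp sTP iT; apply/eqP; rewrite cards_eq0; apply/eqP/setP => H.
rewrite inSub in_set0; apply/negbTE; apply/negP => /and3P[sTH sHP /eqP iH].
have eTP := index1g sTP iT.
have eHP : H = P by apply/val_inj/eqP; rewrite eqEsubset sHP /= -eTP.
move: iH; rewrite eHP indexgg => /esym/eqP.
by rewrite -(expn0 p) eqn_exp2l // prime_gt1.
Qed.

Lemma card_sum (A : {set gT}) : #|A| = \sum_x (x \in A).
Proof. by rewrite -sum1_card big_mkcond. Qed.


Lemma step p k P M T : prime p -> (p.-group P)%g -> maximal M P -> T \subset M ->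
  (#|Sub_k (p ^ k.+1) P T| <= #|Sub_k (p ^ k) M T| + p ^ k.+1 * #|Sub_k (p ^ k.+1) M T|)%N.
Proof.
move=> pp pP maxM sTM.
have p1 : (1 < p)%N := prime_gt1 pp.
have p0 : (0 < p)%N := prime_gt0 pp.
have sMP : M \subset P := proper_sub (maxgroupp maxM).
have iM := p_maximal_index pP maxM.
have nM := p_maximal_normal pP maxM.
have cP : #|P| = (#|M| * p)%N by rewrite -iM Lagrange.
set S := Sub_k (p ^ k.+1)%N P T; set S1 := Sub_k (p ^ k)%N M T; set S2 := Sub_k (p ^ k.+1)%N M T.
have kH : forall H : {group gT}, H \subset P -> ~~ (H \subset M) -> #|H| = (p * #|H :&: M|)%N.
  move=> H sHP nHM.
  have nHMn : H \subset 'N(M) := subset_trans sHP (normal_norm nM).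
  have cHM : commute H M := normC nHMn.
  have sJP : (H <*> M)%G \subset P by rewrite join_subG sHP sMP.
  have eJ : (H <*> M)%g = P.
    case: (boolP ((H <*> M)%G \proper P)) => prJ.
      have := (maxgroupP maxM).2 _ prJ (joing_subr H M) => eJM.
      by case/negP: nHM; rewrite -eJM joing_subl.
    apply/eqP; rewrite eqEsubset sJP /=.
    by move: prJ; rewrite properE sJP /= negbK.
  have := mul_cardG H M; rewrite -comm_joingE // eJ cP.
  move=> /eqP; rewrite mulnC -mulnA eqn_pmul2l ?cardG_gt0 //.
  by move/eqP.
have cS2 : forall K, K \in S2 -> #|M| = (#|K| * p ^ k.+1)%N.
  by move=> K; rewrite inSub => /and3P[_ sKM /eqP <-]; rewrite Lagrange.
have fS : forall H, (H \in S) && ~~ (H \subset M) -> (H :&: M)%G \in S2.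
  move=> H /andP[]; rewrite inSub => /and3P[sTH sHP /eqP iH] nHM.
  rewrite inSub /= subsetI sTH sTM subsetIr /=.
  have cH := kH H sHP nHM.
  have := Lagrange sHP; rewrite iH cP cH => /eqP.
  rewrite (mulnC #|M|) -mulnA eqn_pmul2l // => /eqP eM.
  by rewrite -divgS ?subsetIr //= -eM mulKn ?cardG_gt0.
rewrite -(sum1_card (mem S)) (bigID (fun H => H \subset M)) /=.
apply: leq_add.
  rewrite sum1dep_card; apply: subset_leq_card; apply/subsetP => H.
  rewrite inE inSub => /andP[] /and3P[sTH sHP /eqP iH] sHM.
  rewrite inSub sTH sHM /=.
  have := Lagrange_index sMP sHM; rewrite iM iH expnS => /eqP.
  by rewrite eqn_pmul2l.
rewrite (partition_big (fun H => (H :&: M)%G) (mem S2)) //=.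
rewrite mulnC -sum_nat_const; apply: leq_sum => K KS2.
pose Q := fun i : {group gT} => (i \in S) && ~~ (i \subset M) && ((i :&: M)%G == K).
suff : (\sum_(H | Q H) 1 <= p ^ k.+1)%N by [].
have cK : #|M| = (#|K| * p ^ k.+1)%N := cS2 K KS2.
have sKM : K \subset M by move: KS2; rewrite inSub => /and3P[].
have hQ : forall H, Q H -> [/\ H \subset P, ~~ (H \subset M), H :&: M = K & #|H| = (p * #|K|)%N].
  move=> H; rewrite /Q => /andP[]/andP[]; rewrite inSub => /and3P[_ sHP _] nHM /eqP eK.
  have eK' : H :&: M = K by rewrite -eK.
  by split => //; rewrite (kH H sHP nHM) eK'.
have uq : forall H1 H2 x, Q H1 -> Q H2 -> x \in H1 -> x \in H2 -> x \notin M -> H1 \subset H2.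
  move=> H1 H2 x /hQ[s1 n1 e1 c1] /hQ[s2 n2 e2 c2] x1 x2 xM.
  have sK1 : K \subset H1 by rewrite -e1 subsetIl.
  have sK2 : K \subset H2 by rewrite -e2 subsetIl.
  have maxK : maximal K H1.
    apply: p_index_maximal => //.
    by rewrite -divgS // c1 mulnK ?cardG_gt0.
  have sKL : K \subset (H1 :&: H2)%G by rewrite subsetI sK1 sK2.
  case: (boolP ((H1 :&: H2)%G \proper H1)) => prL.
    have := (maxgroupP maxK).2 _ prL sKL => eLK.
    have : x \in (H1 :&: H2)%G by rewrite inE x1 x2.
    rewrite eLK => xK; case/negP: xM; exact: (subsetP sKM).
  move: prL; rewrite properE subsetIl /= negbK => h.
  exact: (subset_trans h (subsetIr _ _)).
have e1 : (\sum_(H | Q H) #|H :\: M| = (\sum_(H | Q H) 1) * ((p - 1) * #|K|))%N.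
  rewrite big_distrl /=; apply: eq_bigr => H /hQ[_ _ eK cH].
  by rewrite mul1n cardsD eK cH mulnBl mul1n.
have e2 : (\sum_(H | Q H) #|H :\: M| <= #|P :\: M|)%N.
  under eq_bigr => H _ do rewrite card_sum.
  rewrite exchange_big /= card_sum; apply: leq_sum => x _.
  case: (boolP (x \in P :\: M)) => xPM.
    rewrite (eq_bigr (fun H => if x \in H :\: M then 1 else 0)%N) //.
    rewrite -big_mkcondr sum1dep_card.
    apply/card_le1_eqP => H1 H2; rewrite !inE => /andP[q1 /andP[xn1 x1]] /andP[q2 /andP[xn2 x2]].
    by apply/val_inj/eqP; rewrite eqEsubset (uq _ _ x) ?(uq _ _ x).
  rewrite big1 // => H /hQ[sHP _ _ _].
  have : x \notin H :\: M by apply: contra xPM; apply: (subsetP (setSD _ sHP)).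
  by move/negbTE => ->.
have e3 : #|P :\: M| = (p ^ k.+1 * ((p - 1) * #|K|))%N.
  rewrite cardsD (setIidPr sMP) cP cK.
  rewrite mulnBl mul1n mulnBr; congr (_ - _)%N; ring.
have Kp : (0 < (p - 1) * #|K|)%N by rewrite muln_gt0 subn_gt0 p1 cardG_gt0.
by rewrite -(leq_pmul2r Kp) -e1 -e3.
Qed.

End S.


Theorem proposition2p1 (gT : finGroupType) (p : nat) (P T : {group gT}) (c : nat) :
  prime p -> (p.-group P)%g -> T \subset P -> (#|P : T|)%g = (p ^ c)%N ->
  forall k : nat, ((#|Sub_k (p ^ k) P T|)%:R <= gauss_binom p c k :> rat)%R.
Proof.
move=> pp.
elim: c P T => [|c IH] P T pP sTP iT [|k].
- by rewrite gb0 lern1 Sub_1.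
- rewrite Sub_top //; have := gb_big p 0 k; rewrite add0n => ->; by [].
- by rewrite gb0 lern1 Sub_1.
have prT : T \proper P.
  rewrite properEneq sTP andbT; apply/eqP => eTP.
  move: iT; rewrite eTP indexgg => /esym/eqP.
  by rewrite -(expn0 p) eqn_exp2l // prime_gt1.
have [M maxM sTM] := @maxgroup_exists _ (fun G : {group gT} => G \proper P) T prT.
have maxM' : maximal M P by [].
have sMP : M \subset P := proper_sub (maxgroupp maxM).
have pM : (p.-group M)%g := pgroupS sMP pP.
have iMT : #|M : T|%g = (p ^ c)%N.
  have := Lagrange_index sMP sTM; rewrite (p_maximal_index pP maxM') iT expnS => /eqP.
  by rewrite eqn_pmul2l ?prime_gt0 // => /eqP.
apply: (@Order.POrderTheory.le_trans _ _ (((#|Sub_k (p ^ k) M T| + p ^ k.+1 * #|Sub_k (p ^ k.+1) M T|)%N%:R : rat)%R)).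
  by rewrite ler_nat (step k pp pP maxM' sTM).
rewrite natrD natrM gb_pascal //.
apply: lerD; first exact: IH.
by apply: ler_wpM2l; [exact: ler0n | exact: IH].
Qed.
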